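(* Let $P$ be a finite poset and $t\geq 2$, $n\geq 2$ integers. Suppose $\mathcal{F}\subseteq[t]^n$ is induced $P$-saturated and there exist $i,i'$ with $1\leq i<i'\leq n$ such that $f(i)=f(i')$ for all $f\in\mathcal{F}$. Then $L_i(\mathcal{F})=\{L_i(f):f\in\mathcal{F}\}$ is an induced $P$-saturated family in $[t]^{n+1}$.
   Context: For positive integers $n,t$, $[n]=\{1,\dots,n\}$ and the hypergrid $[t]^n$ is the set of functions $f:[n]\to[t]$, partially ordered by $f\leq g$ iff $f(i)\leq g(i)$ for all $i\in[n]$. An induced copy of a poset $P$ in a family $\mathcal{F}\subseteq[t]^n$ is an injective map $\phi:P\to\mathcal{F}$ such that $\phi(x)\leq\phi(y)$ iff $x\leq_P y$. A family $\mathcal{F}\subseteq[t]^n$ is induced $P$-free if it contains no induced copy of $P$; it is induced $P$-saturated if it is induced $P$-free and for every $f\in[t]^n\setminus\mathcal{F}$ the family $\mathcal{F}\cup\{f\}$ contains an induced copy of $P$. For $f\in[t]^n$ and $i\in[n]$, $L_i(f)\in[t]^{n+1}$ is defined by $L_i(f)(x)=f(x)$ for $x\in[n]$ and $L_i(f)(n+1)=f(i)$. *)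

(* Defs.v *)
From mathcomp Require Import all_boot all_order.
Set Implicit Arguments. Unset Strict Implicit. Unset Printing Implicit Defensive.
Import Order.Theory.

(* The hypergrid [t]^n: functions 'I_n -> 'I_t ('I_t = {0,...,t-1}, order-isomorphic
   to {1,...,t}), ordered pointwise. *)
Definition grid (n t : nat) := {ffun 'I_n -> 'I_t}.

Definition grid_le (n t : nat) (f g : grid n t) : bool :=
  [forall i, (f i <= g i)%N].

Definition induced_copy (d : Order.disp_t) (P : finPOrderType d) (n t : nat)
    (F : {set grid n t}) (phi : P -> grid n t) : Prop :=
  [/\ injective phi, (forall x, phi x \in F) &
      (forall x y, grid_le (phi x) (phi y) = (x <= y)%O)].

Definition induced_free d (P : finPOrderType d) n t (F : {set grid n t}) : Prop :=
  ~ exists phi : P -> grid n t, induced_copy F phi.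

Definition induced_saturated d (P : finPOrderType d) n t (F : {set grid n t}) : Prop :=
  induced_free P F /\
  forall f : grid n t, f \notin F ->
    exists phi : P -> grid n t, induced_copy (f |: F) phi.

(* Coordinates 0..n-1 of L_ext i f are those of f; coordinate n (the (n+1)-th) is f i. *)
Definition L_ext n t (i : 'I_n) (f : grid n t) : grid n.+1 t :=
  [ffun x : 'I_n.+1 => if unlift ord_max x is Some j then f j else f i].

(* Main.v *)
Require Import Defs.
From mathcomp Require Import all_boot all_order.
From mathcomp Require Import zify.

Set Implicit Arguments. Unset Strict Implicit. Unset Printing Implicit Defensive.

Definition omax t (x y : 'I_t) : 'I_t := if (x <= y)%N then y else x.
Definition omin t (x y : 'I_t) : 'I_t := if (x <= y)%N then x else y.

Lemma val_omax t (x y : 'I_t) : (omax x y : nat) = maxn x y.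
Proof. rewrite /omax; case: leqP => H; lia. Qed.
Lemma val_omin t (x y : 'I_t) : (omin x y : nat) = minn x y.
Proof. rewrite /omin; case: leqP => H; lia. Qed.

Definition Rdrop n t (g : grid n.+1 t) : grid n t := [ffun j => g (lift ord_max j)].

Lemma L_lift n t (i : 'I_n) (f : grid n t) j : L_ext i f (lift ord_max j) = f j.
Proof. by rewrite ffunE liftK. Qed.
Lemma L_max n t (i : 'I_n) (f : grid n t) : L_ext i f ord_max = f i.
Proof. by rewrite ffunE unlift_none. Qed.

Lemma RL n t (i : 'I_n) : cancel (@L_ext n t i) (@Rdrop n t).
Proof. by move=> f; apply/ffunP => j; rewrite ffunE L_lift. Qed.

Lemma forall_split n (p : pred 'I_n.+1) :
  [forall x, p x] = [forall j : 'I_n, p (lift ord_max j)] && p ord_max.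
Proof.
apply/forallP/andP => [H|[/forallP H1 H2] x].
  by split; [apply/forallP=> j|]; apply H.
by case: (unliftP ord_max x) => [j ->|->].
Qed.

Lemma grid_le_L n t (i : 'I_n) (f g : grid n t) :
  grid_le (L_ext i f) (L_ext i g) = grid_le f g.
Proof.
rewrite /grid_le forall_split L_max L_max.
apply/andP/forallP => [[/forallP H _] j|H].
  by have := H j; rewrite !L_lift.
by split; [apply/forallP => j; rewrite !L_lift|]; apply H.
Qed.

Lemma grid_le_refl n t (f : grid n t) : grid_le f f.
Proof. by apply/forallP. Qed.

Ltac flia f i i' :=
  repeat match goal with H : ?T |- _ =>
    match type of T with Prop => revert H end end;
  let A := fresh "A" in let B := fresh "B" in
  try (set A := nat_of_ord (f i)); try (set B := nat_of_ord (f i')); intros; lia.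

Theorem mainTheorem6 (d : Order.disp_t) (P : finPOrderType d) (t n : nat)
    (F : {set grid n t}) (i i' : 'I_n) :
  (2 <= t)%N -> (2 <= n)%N ->
  induced_saturated P F ->
  (i < i')%N ->
  (forall f, f \in F -> f i = f i') ->
  induced_saturated P [set L_ext i f | f in F].
Proof.
move=> _ _ [Hfree Hsat] Hii' HF.
have ne : i' != i by apply/eqP => E; move: Hii'; rewrite E ltnn.
split.
  move=> [psi [inj mem ord]]; apply: Hfree.
  have HL x : psi x = L_ext i (Rdrop (psi x)) /\ Rdrop (psi x) \in F.
    by case/imsetP: (mem x) => f fF ->; rewrite RL.
  exists (fun x => Rdrop (psi x)); split.
  - move=> x y E; apply: inj.
    by rewrite [LHS](proj1 (HL x)) [RHS](proj1 (HL y)) E.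
  - by move=> x; exact: (proj2 (HL x)).
  - move=> x y; rewrite -ord.
    by rewrite [psi x in RHS](proj1 (HL x)) [psi y in RHS](proj1 (HL y)) grid_le_L.
move=> g gnot.
pose a := g (lift ord_max i); pose b := g (lift ord_max i'); pose c := g ord_max.
pose h : grid n t := [ffun j => if j == i then omax (omax a b) c
   else if j == i' then omin (omin a b) c else g (lift ord_max j)].
have hi : h i = omax (omax a b) c by rewrite ffunE eqxx.
have hi' : h i' = omin (omin a b) c by rewrite ffunE eqxx (negbTE ne).
have hj j : j != i -> j != i' -> h j = g (lift ord_max j).
  by move=> /negbTE ni /negbTE ni'; rewrite ffunE ni ni'.
have Kup f : f \in F -> grid_le h f = grid_le g (L_ext i f).
  move=> fF; have fe : (f i : nat) = f i' by rewrite (HF f fF).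
  rewrite /grid_le forall_split L_max.
  apply/forallP/andP => [H|[/forallP H1 H2] j].
    have := H i; have := H i'; rewrite hi hi' !val_omax !val_omin => H2 H1.
    split; last by rewrite -/c; flia f i i'.
    apply/forallP => j; rewrite L_lift; change (g (lift ord_max j) <= f j)%N.
    case: (eqVneq j i) => [->|ni]; first by rewrite -/a; flia f i i'.
    case: (eqVneq j i') => [->|ni']; first by rewrite -/b; flia f i i'.
    by have := H j; rewrite hj.
  have Ha : (a <= f i)%N by have := H1 i; rewrite L_lift.
  have Hb : (b <= f i')%N by have := H1 i'; rewrite L_lift.
  have Hc : (c <= f i)%N by [].
  case: (eqVneq j i) => [->|ni]; first by rewrite hi !val_omax; flia f i i'.
  case: (eqVneq j i') => [->|ni']; first by rewrite hi' !val_omin; flia f i i'.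
  by have := H1 j; rewrite hj // L_lift.
have Kdn f : f \in F -> grid_le f h = grid_le (L_ext i f) g.
  move=> fF; have fe : (f i : nat) = f i' by rewrite (HF f fF).
  rewrite /grid_le forall_split L_max.
  apply/forallP/andP => [H|[/forallP H1 H2] j].
    have := H i; have := H i'; rewrite hi hi' !val_omax !val_omin => H2 H1.
    split; last by rewrite -/c; flia f i i'.
    apply/forallP => j; rewrite L_lift; change (f j <= g (lift ord_max j))%N.
    case: (eqVneq j i) => [->|ni]; first by rewrite -/a; flia f i i'.
    case: (eqVneq j i') => [->|ni']; first by rewrite -/b; flia f i i'.
    by have := H j; rewrite hj.
  have Ha : (f i <= a)%N by have := H1 i; rewrite L_lift.
  have Hb : (f i' <= b)%N by have := H1 i'; rewrite L_lift.
  have Hc : (f i <= c)%N by [].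
  case: (eqVneq j i) => [->|ni]; first by rewrite hi !val_omax; flia f i i'.
  case: (eqVneq j i') => [->|ni']; first by rewrite hi' !val_omin; flia f i i'.
  by have := H1 j; rewrite hj // L_lift.
have hF : h \notin F.
  apply/negP => hF; move: (HF h hF); rewrite hi hi' => /(congr1 (@nat_of_ord t)).
  rewrite !val_omax !val_omin => E.
  move: gnot; suff -> : g = L_ext i h by rewrite imset_f.
  apply/ffunP => x; case: (unliftP ord_max x) => [j ->|->]; apply: (@ord_inj t).
    rewrite L_lift.
    case: (eqVneq j i) => [->|ni]; first by rewrite hi val_omax val_omax -/a; lia.
    case: (eqVneq j i') => [->|ni']; first by rewrite hi' val_omin val_omin -/b; lia.
    by rewrite hj.
  by rewrite L_max hi !val_omax -/c; lia.
have [phi [inj mem ord]] := Hsat h hF.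
have memF x : phi x != h -> phi x \in F.
  by move=> nh; case/setU1P: (mem x) => // E; rewrite E eqxx in nh.
have gL f : f \in F -> g <> L_ext i f.
  by move=> fF E; move: gnot; rewrite E imset_f.
exists (fun x => if phi x == h then g else L_ext i (phi x)); split.
- move=> x y /=.
  case: (eqVneq (phi x) h) => Ex; case: (eqVneq (phi y) h) => Ey E.
  + by apply: inj; rewrite Ex Ey.
  + by exfalso; apply: (gL _ (memF y Ey)).
  + by exfalso; apply: (gL _ (memF x Ex)).
  + by apply: inj; exact: (can_inj (@RL n t i)).
- move=> x /=; rewrite in_setU1; case: (eqVneq (phi x) h) => E; first by rewrite eqxx.
  by apply/orP; right; apply/imsetP; exists (phi x) => //; apply: memF.
- move=> x y /=; rewrite -ord.
  case: (eqVneq (phi x) h) => Ex; case: (eqVneq (phi y) h) => Ey.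
  + by rewrite Ex Ey !grid_le_refl.
  + by rewrite Ex Kup // memF.
  + by rewrite Ey Kdn // memF.
  + by rewrite grid_le_L.
Qed.
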